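(* Let $I,S\ge 0$ be integers and consider the pairing process described in the context. The minimum, over all possible wirings, of the number of bb-pairings equals $$L(I,S)=\begin{cases}0 & \text{if } I\le S,\\ \frac{I-S}{2} & \text{if } I>S \text{ and } I-S \text{ is even},\\ \frac{I-S-1}{2} & \text{if } I>S \text{ and } I-S \text{ is odd},\end{cases}$$ and the maximum number of bb-pairings in a possible wiring is $\lfloor I/2\rfloor$.
   Context: Pairing process: there are $I$ infected devices $b_1,\dots,b_I$ and $S$ clean devices $w_1,\dots,w_S$. For $t=1,\dots,I$ in this order: if $b_t$ is not yet paired and at least one device other than $b_t$ is not yet paired, then $b_t$ chooses one of the currently unpaired devices other than itself uniformly at random, independently of previous choices, and becomes paired with it; otherwise $b_t$ does nothing. Each device belongs to at most one pair. The wiring is the final set of pairs; a bb-pairing is a pair consisting of two infected devices; a wiring is possible if it occurs with positive probability. *)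

(* Defs.v *)
From mathcomp Require Import all_boot.
Set Implicit Arguments. Unset Strict Implicit. Unset Printing Implicit Defensive.

(* Devices are the naturals 0 .. I+S-1.  Infected device b_{t+1} is the
   number t (for t < I); clean device w_{j+1} is the number I + j (j < S).
   A (partial) wiring is a list of pairs (x, y): infected device x chose y. *)

Definition pairing := seq (nat * nat).

Definition paired (w : pairing) (x : nat) : bool :=
  has (fun p : nat * nat => (p.1 == x) || (p.2 == x)) w.

Definition exists_free_other (I S : nat) (w : pairing) (x : nat) : bool :=
  has (fun y => (y != x) && ~~ paired w y) (iota 0 (I + S)).

(* reach I S t w : after infected devices 0..t-1 have acted, the current set
   of pairs w occurs with positive probability.  Since each choice is uniform
   over a nonempty finite set, an outcome has positive probability iff it is
   obtained by some sequence of admissible choices. *)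
Inductive reach (I S : nat) : nat -> pairing -> Prop :=
| reach0 : reach I S 0 [::]
| reach_skip_paired t w :
    reach I S t w -> t < I -> paired w t -> reach I S t.+1 w
| reach_skip_nofree t w :
    reach I S t w -> t < I -> ~~ paired w t ->
    ~~ exists_free_other I S w t -> reach I S t.+1 w
| reach_choose t w y :
    reach I S t w -> t < I -> ~~ paired w t ->
    y < I + S -> y != t -> ~~ paired w y ->
    reach I S t.+1 ((t, y) :: w).

Definition possible (I S : nat) (w : pairing) : Prop := reach I S I w.

Definition n_bb (I : nat) (w : pairing) : nat :=
  count (fun p : nat * nat => (p.1 < I) && (p.2 < I)) w.

Definition L (I S : nat) : nat :=
  if I <= S then 0
  else if ~~ odd (I - S) then (I - S) %/ 2
  else (I - S - 1) %/ 2.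

(* Main.v *)
Require Import Defs.
From mathcomp Require Import all_boot zify.

Fixpoint dev (w : pairing) : seq nat :=
  if w is p :: w' then p.1 :: p.2 :: dev w' else [::].

Lemma pairedE w x : paired w x = (x \in dev w).
Proof.
elim: w => [|[a b] w IH] //=. rewrite /paired /= -/(paired w x) IH !in_cons.
by rewrite ![_ == x]eq_sym orbA.
Qed.

Lemma paired_cons p w x : paired (p :: w) x = (p.1 == x) || (p.2 == x) || paired w x.
Proof. by []. Qed.

Lemma count_dev I w : all (fun p : nat * nat => p.1 < I) w ->
  count (fun y => y < I) (dev w) = size w + n_bb I w /\
  count (fun y => I <= y) (dev w) + n_bb I w = size w.
Proof.
elim: w => [|[a b] w IH] //= /andP [ha hw]. have [h1 h2] := IH hw.
rewrite /n_bb /= -/(n_bb I w).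
split; lia.
Qed.

Record inv (I S t : nat) (w : pairing) : Prop := Inv {
  inv_uniq : uniq (dev w);
  inv_bound : all (fun y => y < I + S) (dev w);
  inv_fst : all (fun p : nat * nat => p.1 < I) w;
  inv_done : forall x, x < t -> x < I ->
     paired w x \/ (forall y, y < I + S -> y != x -> paired w y)
}.

Lemma reach_inv I S t w : reach I S t w -> inv I S t w.
Proof.
elim => {t w}.
- by constructor => // x.
- move=> t w _ [u b f d] tI pt; constructor => // x; rewrite ltnS leq_eqVlt.
  case/orP => [/eqP -> _|]; [by left | exact: d].
- move=> t w _ [u b f d] tI pt nf; constructor => // x; rewrite ltnS leq_eqVlt.
  case/orP => [/eqP -> _|]; last exact: d.
  right => y yl yt. move/hasPn: nf => /(_ y).
  rewrite mem_iota /= yl => /(_ isT). by rewrite yt /= negbK.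
- move=> t w y _ [u b f d] tI pt yl yt py; constructor.
  + rewrite /= u andbT !inE negb_or -!pairedE pt py /= !andbT eq_sym; exact: yt.
  + apply/allP => z; rewrite /= !inE => /or3P [/eqP->|/eqP->|/(allP b)] //; lia.
  + by apply/andP; split.
  + move=> x; rewrite ltnS leq_eqVlt; case/orP => [/eqP -> _|xt xI].
    * by left; rewrite paired_cons eqxx.
    * case: (d x xt xI) => [h|h]; [left|right].
      - by rewrite paired_cons h !orbT.
      - by move=> z zl zx; rewrite paired_cons h ?orbT.
Qed.

Lemma cnt_le (p : pred nat) s r : uniq s -> {subset [seq x <- s | p x] <= r} ->
  count p s <= size r.
Proof. move=> us sub; rewrite -size_filter; apply: uniq_leq_size => //; exact: filter_uniq. Qed.

Lemma cnt_ge (p : pred nat) s r : uniq r -> {subset r <= s} -> all p r ->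
  size r <= count p s.
Proof.
move=> ur sub ap; rewrite -size_filter; apply: uniq_leq_size => // y yr.
by rewrite mem_filter (allP ap) // sub.
Qed.

Lemma Lalt I S : L I S = (I - S) %/ 2.
Proof.
rewrite /L; case: ifP => h; first lia.
have := modn2 (I - S). case: (odd (I - S)) => /= E; lia.
Qed.

Lemma lower I S w : possible I S w -> L I S <= n_bb I w.
Proof.
move=> /reach_inv [u b f d]. have [c1 c2] := count_dev _ _ f.
rewrite Lalt.
have le1 : count (fun y => y < I) (dev w) <= I.
  rewrite -[X in _ <= X](size_iota 0 I); apply: cnt_le => // y; rewrite mem_filter mem_iota.
  by case/andP => ->.
have le2 : count (fun y => I <= y) (dev w) <= S.
  rewrite -[X in _ <= X](size_iota I S); apply: cnt_le => // y; rewrite mem_filter mem_iota.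
  case/andP => -> yd /=. by have := allP b y yd.
case: (boolP [forall x : 'I_I, paired w x]) => [/forallP A | /forallPn [x Px]].
- have : I <= count (fun y => y < I) (dev w).
    rewrite -[X in X <= _](size_iota 0 I); apply: cnt_ge; first exact: iota_uniq.
      move=> y; rewrite mem_iota /= => yI. by rewrite -pairedE (A (Ordinal yI)).
    by apply/allP => y; rewrite mem_iota.
  lia.
- have xI := ltn_ord x. case: (d x xI xI) => [h|h]; first by rewrite h in Px.
  have ux : uniq (rem (nat_of_ord x) (iota 0 I)) by apply: rem_uniq; exact: iota_uniq.
  have sx : size (rem (nat_of_ord x) (iota 0 I)) = I.-1.
    by rewrite size_rem ?size_iota // mem_iota.
  have g1 : I.-1 <= count (fun y => y < I) (dev w).
    rewrite -sx; apply: cnt_ge => //.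
      move=> y; rewrite mem_rem_uniq ?iota_uniq // !inE mem_iota /= => /andP [yx yI].
      rewrite -pairedE; apply: h => //; lia.
    apply/allP => y; rewrite mem_rem_uniq ?iota_uniq // !inE mem_iota /=; by case/andP.
  have l1 : count (fun y => y < I) (dev w) <= I.-1.
    rewrite -sx; apply: cnt_le => // y; rewrite mem_filter mem_rem_uniq ?iota_uniq // !inE.
    rewrite mem_iota /=; case/andP => yI yd; rewrite yI andbT.
    apply/eqP => E; move: Px; by rewrite pairedE -E yd.
  have g2 : S <= count (fun y => I <= y) (dev w).
    rewrite -[X in X <= _](size_iota I S); apply: cnt_ge; first exact: iota_uniq.
      move=> y; rewrite mem_iota => /andP [y1 y2]; rewrite -pairedE; apply: h => //.
      apply/eqP => E; move: y1; rewrite E; lia.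
    by apply/allP => y; rewrite mem_iota; case/andP.
  lia.
Qed.

Lemma upper I S w : possible I S w -> n_bb I w <= I %/ 2.
Proof.
move=> /reach_inv [u b f d]. have [c1 c2] := count_dev _ _ f.
have le1 : count (fun y => y < I) (dev w) <= I.
  rewrite -[X in _ <= X](size_iota 0 I); apply: cnt_le => // y; rewrite mem_filter mem_iota.
  by case/andP => ->.
lia.
Qed.

Fixpoint P1 (I k : nat) : pairing :=
  if k is k'.+1 then (k', I + k') :: P1 I k' else [::].
Fixpoint P2 (m j : nat) : pairing :=
  if j is j'.+1 then (m + 2 * j', m + 2 * j' + 1) :: P2 m j' else [::].

Lemma P1E I k x : paired (P1 I k) x = (x < k) || (I <= x < I + k).
Proof. elim: k => [|k IH]; first by rewrite /=; lia. rewrite paired_cons IH /=; lia. Qed.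

Lemma P2E m j x : paired (P2 m j) x = (m <= x < m + 2 * j).
Proof. elim: j => [|j IH]; first by rewrite /=; lia. rewrite paired_cons IH /=; lia. Qed.

Lemma paired_cat w1 w2 x : paired (w1 ++ w2) x = paired w1 x || paired w2 x.
Proof. by rewrite /paired has_cat. Qed.

Lemma nbb_P1 I k : n_bb I (P1 I k) = 0.
Proof. elim: k => //= k IH; rewrite /n_bb /= -/(n_bb I (P1 I k)) IH; lia. Qed.

Lemma nbb_P2 I m j : m + 2 * j <= I -> n_bb I (P2 m j) = j.
Proof. elim: j => //= j IH h; rewrite /n_bb /= -/(n_bb I (P2 m j)) IH; lia. Qed.

Lemma reachP1 I S m k : m <= I -> m <= S -> k <= m -> reach I S k (P1 I k).
Proof.
move=> mI mS; elim: k => [|k IH] km; first exact: reach0.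
apply: reach_choose; first (apply: IH; lia).
all: rewrite ?P1E; lia.
Qed.

Lemma reachP2 I S m j : m <= I -> m <= S -> m + 2 * j <= I ->
  reach I S (m + 2 * j) (P2 m j ++ P1 I m).
Proof.
move=> mI mS; elim: j => [|j IH] h; first by rewrite muln0 addn0; exact: (@reachP1 I S m m mI mS (leqnn m)).
have -> : m + 2 * j.+1 = (m + 2 * j).+2 by lia.
apply: reach_skip_paired; first apply: (@reach_choose I S (m + 2 * j) (P2 m j ++ P1 I m)).
all: rewrite ?paired_cons ?paired_cat ?P1E ?P2E /=; try lia.
apply: IH; lia.
Qed.

Lemma construct I S m : m <= I -> m <= S -> ((I - m) %% 2 = 0 \/ m = S) ->
  exists w, possible I S w /\ n_bb I w = (I - m) %/ 2.
Proof.
move=> mI mS hm; set j := (I - m) %/ 2.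
exists (P2 m j ++ P1 I m).
have hj : m + 2 * j <= I by rewrite /j; lia.
split; last by rewrite /n_bb count_cat -/(n_bb I _) -/(n_bb I _) nbb_P1 nbb_P2 // addn0.
rewrite /possible.
have [E|E] : (m + 2 * j = I) \/ (m + 2 * j).+1 = I /\ m = S by rewrite /j; lia.
  by rewrite -[X in reach _ _ X _]E; apply: reachP2.
case: E => E mSe. rewrite -[X in reach _ _ X _]E; apply: reach_skip_nofree; first exact: (@reachP2 I S m j mI mS hj).
- lia.
- rewrite paired_cat P1E P2E; lia.
- apply/hasPn => y; rewrite mem_iota /= => yl.
  rewrite paired_cat P1E P2E; lia.
Qed.

Theorem lemma1 (I S : nat) :
  ((exists w, possible I S w /\ n_bb I w = L I S) /\
   (forall w, possible I S w -> L I S <= n_bb I w)) /\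
  ((exists w, possible I S w /\ n_bb I w = I %/ 2) /\
   (forall w, possible I S w -> n_bb I w <= I %/ 2)).
Proof.
split; split.
- have [w [pw nw]] := @construct I S (minn I S) ltac:(lia) ltac:(lia) ltac:(lia).
  exists w; split => //; rewrite nw Lalt; lia.
- exact: lower.
- pose m := if (I %% 2 == 1) && (0 < S) then 1 else 0.
  have [w [pw nw]] : exists w, possible I S w /\ n_bb I w = (I - m) %/ 2.
    apply: construct; rewrite /m; case: ifP => /= h; lia.
  exists w; split => //; rewrite nw /m; case: ifP => /= h; lia.
- exact: upper.
Qed.
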